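(* For every $n\ge1$, $$u_{2n}(a)\,a^{2n}=\sum_{k=0}^\infty(-1)^k\frac{A_k[n]}{a^{2k}},$$ where the series converges absolutely for $|a|>n$.
   Context: The rational functions $u_{2n}(a)$: $(a^2+1)u_2=1$ and for $n\ge2$: $(a^2+n^2)u_{2n}=3u_{2(n-1)}+3\sum_{j_1+j_2=n-1}u_{2j_1}u_{2j_2}+\sum_{j_1+j_2+j_3=n-1}u_{2j_1}u_{2j_2}u_{2j_3}-\sum_{1\le j_1,\,2j_1<n}(n-2j_1)^2u_{2j_1}u_{2(n-j_1)}$, all indices $j_i\ge1$. $A_0(z)$ is the unique function holomorphic near $0$ with $A_0(0)=0$ and $z(1+A_0)^3=A_0$; $(A_k)_{k\ge0}$ is the unique sequence of functions holomorphic in $|z|<4/27$ such that $\sum_kA_k(z)a^{-2k}$ formally solves $a^2(z(1+A)^3-A)=(1+A)\delta_z^2A-(\delta_zA)^2$, $\delta_z=z\,d/dz$. The numbers $A_k[n]$ are defined by $A_k(z)=(-1)^k\sum_{n\ge1}A_k[n]z^n$. *)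

(* Defs.v *)
From Stdlib Require Import Reals Arith.
From Coquelicot Require Import Coquelicot.
Open Scope C_scope.
Open Scope bool_scope.

Fixpoint csum (f : nat -> C) (n : nat) : C :=
  match n with
  | O => RtoC 0
  | S m => csum f m + f m
  end.

Definition Cnat (n : nat) : C := RtoC (INR n).

(* One step of the recursion defining u_{2n}(a), n >= 1, given the table
   t j = u_{2j}(a) for 1 <= j <= n-1.  Division by a^2+n^2 (total Cinv). *)
Definition u_step (n : nat) (t : nat -> C) (a : C) : C :=
  if Nat.eqb n 1 then RtoC 1 / (a ^ 2 + RtoC 1)
  else
   (RtoC 3 * t (n - 1)%nat
    + RtoC 3 * csum (fun j1 => csum (fun j2 =>
         if (1 <=? j1) && (1 <=? j2) && Nat.eqb (j1 + j2)%nat (n - 1)%nat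
         then t j1 * t j2 else RtoC 0) n) n
    + csum (fun j1 => csum (fun j2 => csum (fun j3 =>
         if (1 <=? j1) && (1 <=? j2) && (1 <=? j3) && Nat.eqb (j1 + j2 + j3)%nat (n - 1)%nat
         then t j1 * t j2 * t j3 else RtoC 0) n) n) n
    - csum (fun j1 =>
         if (1 <=? j1) && (2 * j1 <? n)%nat
         then Cnat (n - 2 * j1)%nat ^ 2 * t j1 * t (n - j1)%nat else RtoC 0) n)
   / (a ^ 2 + Cnat n ^ 2).

Fixpoint u_table (n : nat) (a : C) : nat -> C :=
  match n with
  | O => fun _ => RtoC 0
  | S m => let t := u_table m a in
           fun j => if j <=? m then t j else u_step (S m) t a
  end.

(* u n a = u_{2n}(a)  (n >= 1) *)
Definition u (n : nat) (a : C) : C := u_table n a n.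

(* ---- Bivariate formal power series in (w, z): F k n = coeff of w^k z^n,
   with w = a^{-2}.  A function A_k(z) holomorphic near 0 is represented
   by its Taylor coefficients (fun n => F k n). ---- *)
Definition bser := nat -> nat -> C.

Definition bone : bser := fun k n => if (Nat.eqb k 0) && (Nat.eqb n 0) then RtoC 1 else RtoC 0.
Definition badd (F G : bser) : bser := fun k n => F k n + G k n.
Definition bsub (F G : bser) : bser := fun k n => F k n - G k n.
Definition bmul (F G : bser) : bser := fun k n =>
  csum (fun i => csum (fun j => F i j * G (k - i)%nat (n - j)%nat) (S n)) (S k).
Definition bz (F : bser) : bser := fun k n => match n with O => RtoC 0 | S m => F k m end.
Definition bw (F : bser) : bser := fun k n => match k with O => RtoC 0 | S m => F m n end.
(* delta_z = z d/dz acting termwise *)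
Definition bdelta (F : bser) : bser := fun k n => Cnat n * F k n.

(* The formal equation a^2 (z(1+A)^3 - A) = (1+A) delta^2 A - (delta A)^2,
   equivalently  z(1+A)^3 - A = w ((1+A) delta^2 A - (delta A)^2),
   read coefficientwise in w = a^{-2} and z. *)
Definition formally_solves (A : bser) : Prop :=
  let A1 := badd bone A in
  bsub (bz (bmul A1 (bmul A1 A1))) A
  = bw (bsub (bmul A1 (bdelta (bdelta A))) (bmul (bdelta A) (bdelta A))).

(* A_k (given by coefficients A k) is holomorphic in |z| < 4/27: its Taylor
   series converges there. *)
Definition holo_disk (A : bser) : Prop :=
  forall k (z : C), (Cmod z < 4 / 27)%R -> ex_series (fun n => A k n * z ^ n).

(* A_k[n], defined by A_k(z) = (-1)^k sum_{n>=1} A_k[n] z^n *)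
Definition Akn (A : bser) (k n : nat) : C := (- RtoC 1) ^ k * A k n.

(* Main.v *)
Require Import Defs.
From Stdlib Require Import Reals Lia Lra.
From Coquelicot Require Import Coquelicot.
Open Scope C_scope.
Lemma fst_sum_n (a : nat -> C) N : fst (sum_n a N) = sum_n (fun k => fst (a k)) N.
Proof. induction N; [rewrite sum_O, sum_O; auto | rewrite sum_Sn, sum_Sn, <- IHN; reflexivity]. Qed.
Lemma snd_sum_n (a : nat -> C) N : snd (sum_n a N) = sum_n (fun k => snd (a k)) N.
Proof. induction N; [rewrite sum_O, sum_O; auto | rewrite sum_Sn, sum_Sn, <- IHN; reflexivity]. Qed.

Lemma is_series_C_parts (a : nat -> C) l1 l2 :
  is_series (fun n => fst (a n)) l1 -> is_series (fun n => snd (a n)) l2 -> is_series a (l1,l2).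
Proof.
  unfold is_series. intros H1 H2. apply filterlim_locally. intro eps.
  pose proof (proj1 (filterlim_locally _ _) H1 eps) as G1.
  pose proof (proj1 (filterlim_locally _ _) H2 eps) as G2.
  generalize (filter_and _ _ G1 G2). apply filter_imp. intros N [h1 h2].
  split; [rewrite fst_sum_n | rewrite snd_sum_n]; assumption.
Qed.

Lemma is_series_C_unique (a : nat -> C) (l l' : C) : is_series a l -> is_series a l' -> l = l'.
Proof. unfold is_series. intros H H'. exact (filterlim_locally_unique _ _ _ H H'). Qed.

Lemma Rabs_snd_le (c : C) : (Rabs (snd c) <= Cmod c)%R.
Proof.
  destruct c as [x y]. unfold Cmod; simpl. rewrite <- sqrt_Rsqr_abs. apply sqrt_le_1_alt.
  unfold Rsqr. nra.
Qed.
Lemma Rabs_fst_le (c : C) : (Rabs (fst c) <= Cmod c)%R.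
Proof. apply re_le_Cmod. Qed.


Lemma abs_conv_C (a : nat -> C) : ex_series (fun n => Cmod (a n)) ->
  exists l1 l2, is_series (fun n => fst (a n)) l1 /\ is_series (fun n => snd (a n)) l2.
Proof.
  intros H.
  assert (E1 : ex_series (fun n => fst (a n))).
  { apply ex_series_Rabs. eapply (ex_series_le (K:=R_AbsRing) (V:=R_CompleteNormedModule)); [|exact H].
    intro n. unfold norm; simpl. rewrite Rabs_Rabsolu. apply Rabs_fst_le. }
  assert (E2 : ex_series (fun n => snd (a n))).
  { apply ex_series_Rabs. eapply (ex_series_le (K:=R_AbsRing) (V:=R_CompleteNormedModule)); [|exact H].
    intro n. unfold norm; simpl. rewrite Rabs_Rabsolu. apply Rabs_snd_le. }
  destruct E1 as [l1 H1]. destruct E2 as [l2 H2]. exists l1, l2. auto.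
Qed.

Lemma abs_conv_parts (a : nat -> C) l : ex_series (fun n => Cmod (a n)) -> is_series a l ->
  is_series (fun n => fst (a n)) (fst l) /\ is_series (fun n => snd (a n)) (snd l).
Proof.
  intros H Hl. destruct (abs_conv_C a H) as (l1 & l2 & H1 & H2).
  assert (l = (l1,l2)) by (eapply is_series_C_unique; [exact Hl | apply is_series_C_parts; auto]).
  subst l. simpl. auto.
Qed.

Lemma fst_csum (f : nat -> C) n : fst (csum f (S n)) = sum_f_R0 (fun k => fst (f k)) n.
Proof.
  induction n.
  - simpl. ring.
  - change (csum f (S (S n))) with (csum f (S n) + f (S n)).
    simpl sum_f_R0. rewrite <- IHn. reflexivity.
Qed.
Lemma snd_csum (f : nat -> C) n : snd (csum f (S n)) = sum_f_R0 (fun k => snd (f k)) n.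
Proof.
  induction n.
  - simpl. ring.
  - change (csum f (S (S n))) with (csum f (S n) + f (S n)).
    simpl sum_f_R0. rewrite <- IHn. reflexivity.
Qed.

Lemma exR_fst (a : nat -> C) : ex_series (fun n => Cmod (a n)) -> ex_series (fun n => Rabs (fst (a n))).
Proof.
  intro H. eapply (ex_series_le (K:=R_AbsRing) (V:=R_CompleteNormedModule)); [|exact H].
  intro n. unfold norm; simpl. rewrite Rabs_Rabsolu. apply Rabs_fst_le.
Qed.
Lemma exR_snd (a : nat -> C) : ex_series (fun n => Cmod (a n)) -> ex_series (fun n => Rabs (snd (a n))).
Proof.
  intro H. eapply (ex_series_le (K:=R_AbsRing) (V:=R_CompleteNormedModule)); [|exact H].
  intro n. unfold norm; simpl. rewrite Rabs_Rabsolu. apply Rabs_snd_le.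
Qed.

Lemma cmertens (a b : nat -> C) la lb :
  ex_series (fun n => Cmod (a n)) -> ex_series (fun n => Cmod (b n)) ->
  is_series a la -> is_series b lb ->
  is_series (fun n => csum (fun k => a k * b (n - k)%nat) (S n)) (la * lb).
Proof.
  intros Ea Eb Ha Hb.
  destruct (abs_conv_parts a la Ea Ha) as [Ha1 Ha2].
  destruct (abs_conv_parts b lb Eb Hb) as [Hb1 Hb2].
  pose proof (exR_fst a Ea) as Ra1. pose proof (exR_snd a Ea) as Ra2.
  pose proof (exR_fst b Eb) as Rb1. pose proof (exR_snd b Eb) as Rb2.
  pose proof (is_series_mult _ _ _ _ Ha1 Hb1 Ra1 Rb1) as M11.
  pose proof (is_series_mult _ _ _ _ Ha2 Hb2 Ra2 Rb2) as M22.
  pose proof (is_series_mult _ _ _ _ Ha1 Hb2 Ra1 Rb2) as M12.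
  pose proof (is_series_mult _ _ _ _ Ha2 Hb1 Ra2 Rb1) as M21.
  replace (la * lb) with ((fst la * fst lb - snd la * snd lb)%R, (fst la * snd lb + snd la * fst lb)%R)
    by reflexivity.
  apply is_series_C_parts.
  - pose proof (is_series_minus _ _ _ _ M11 M22) as M.
    eapply is_series_ext; [|exact M]. intro n.
    rewrite fst_csum.
    transitivity (sum_f_R0 (fun k => fst (a k) * fst (b (n-k)%nat) - snd (a k) * snd (b (n-k)%nat))%R n).
    + rewrite minus_sum; reflexivity.
    + apply sum_eq; intros; reflexivity.
  - pose proof (is_series_plus _ _ _ _ M12 M21) as M.
    eapply is_series_ext; [|exact M]. intro n.
    rewrite snd_csum.
    transitivity (sum_f_R0 (fun k => fst (a k) * snd (b (n-k)%nat) + snd (a k) * fst (b (n-k)%nat))%R n).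
    + rewrite plus_sum; reflexivity.
    + apply sum_eq; intros; reflexivity.
Qed.

Lemma Cmod_csum_le (f : nat -> C) n : (Cmod (csum f (S n)) <= sum_f_R0 (fun k => Cmod (f k)) n)%R.
Proof.
  induction n.
  - simpl. rewrite Cplus_0_l. lra.
  - change (csum f (S (S n))) with (csum f (S n) + f (S n)). simpl sum_f_R0.
    eapply Rle_trans; [apply Cmod_triangle|]. lra.
Qed.

Lemma cabs_prod (a b : nat -> C) :
  ex_series (fun n => Cmod (a n)) -> ex_series (fun n => Cmod (b n)) ->
  ex_series (fun n => Cmod (csum (fun k => a k * b (n - k)%nat) (S n))).
Proof.
  intros [la Ha] [lb Hb].
  pose proof (is_series_mult_pos _ _ _ _ Ha Hb (fun n => Cmod_ge_0 _) (fun n => Cmod_ge_0 _)) as M.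
  eapply (ex_series_le (K:=R_AbsRing) (V:=R_CompleteNormedModule)); [|eexists; exact M].
  intro n. unfold norm; simpl. rewrite Rabs_pos_eq by apply Cmod_ge_0.
  eapply Rle_trans; [apply Cmod_csum_le|]. right. apply sum_eq. intros. apply Cmod_mult.
Qed.

Lemma abs_conv_is (a : nat -> C) : ex_series (fun n => Cmod (a n)) -> exists l : C, is_series a l.
Proof.
  intro H. destruct (abs_conv_C a H) as (l1 & l2 & H1 & H2). exists (l1,l2).
  apply is_series_C_parts; auto.
Qed.

Lemma cgeom (q : C) : (Cmod q < 1)%R ->
  ex_series (fun k => Cmod (q ^ k)) /\ is_series (fun k => q ^ k) (/ (1 - q)).
Proof.
  intro Hq.
  assert (E : ex_series (fun k => Cmod (q ^ k))).
  { eapply ex_series_ext; [|apply (ex_series_geom (Cmod q))].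
    - intro n. simpl. rewrite Cmod_pow. reflexivity.
    - rewrite Rabs_pos_eq by apply Cmod_ge_0. exact Hq. }
  split; auto.
  destruct (abs_conv_is _ E) as [l Hl].
  assert (H1 : is_series (fun k => q ^ (S k)) (l - 1)).
  { apply is_series_incr_1.
    match goal with |- is_series _ ?x => replace x with l; [exact Hl|] end.
    change (l = Cplus (l - 1) 1); ring. }
  assert (H2 : is_series (fun k => q ^ (S k)) (q * l)).
  { pose proof (is_series_scal (K:=C_AbsRing) (V:=C_NormedModule) q _ _ Hl) as H2.
    change (scal q l) with (q * l) in H2.
    eapply is_series_ext; [|exact H2]. intro n. reflexivity. }
  pose proof (is_series_C_unique _ _ _ H1 H2) as Heq.
  assert (Hne : 1 - q <> 0).
  { intro Hc. assert (q = 1) by (apply Ceq_minus in Hc; auto). subst q.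
    rewrite Cmod_1 in Hq. lra. }
  assert (Hm : l * (1 - q) = 1).
  { replace (l * (1 - q)) with (l - q * l) by ring. rewrite <- Heq. ring. }
  assert (Hleq : l = / (1 - q)).
  { assert (E2 : l = l * (1 - q) / (1 - q)) by (field; auto).
    rewrite E2, Hm. unfold Cdiv. ring. }
  rewrite <- Hleq. exact Hl.
Qed.

Lemma csum_ext (f g : nat -> C) N : (forall j, (j < N)%nat -> f j = g j) -> csum f N = csum g N.
Proof. induction N; intros H; simpl; auto. rewrite IHN by (intros; apply H; lia). rewrite H by lia. auto. Qed.
Lemma csum_add (f g : nat -> C) N : csum (fun j => f j + g j) N = csum f N + csum g N.
Proof. induction N; simpl. ring. rewrite IHN. ring. Qed.
Lemma csum_sub (f g : nat -> C) N : csum (fun j => f j - g j) N = csum f N - csum g N.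
Proof. induction N; simpl. ring. rewrite IHN. ring. Qed.
Lemma csum_scal (c : C) (f : nat -> C) N : csum (fun j => c * f j) N = c * csum f N.
Proof. induction N; simpl. ring. rewrite IHN. ring. Qed.
Lemma csum_zero N : csum (fun _ => 0) N = 0.
Proof. induction N; simpl. auto. rewrite IHN. ring. Qed.
Lemma csum_first (f : nat -> C) N : csum f (S N) = f 0%nat + csum (fun j => f (S j)) N.
Proof. induction N. simpl. ring. change (csum f (S (S N)) = f 0%nat + (csum (fun j => f (S j)) N + f (S N))).
  change (csum f (S (S N))) with (csum f (S N) + f (S N)). rewrite IHN. ring. Qed.
Lemma csum_swap (F : nat -> nat -> C) N M :
  csum (fun i => csum (fun j => F i j) M) N = csum (fun j => csum (fun i => F i j) N) M.
Proof.
  induction N; simpl.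
  - rewrite csum_zero. auto.
  - rewrite IHN. rewrite <- csum_add. auto.
Qed.
Lemma csum_rev (f : nat -> C) N : csum (fun j => f (N - j)%nat) (S N) = csum f (S N).
Proof.
  induction N.
  - simpl. auto.
  - rewrite csum_first. replace (S N - 0)%nat with (S N) by lia.
    change (csum f (S (S N))) with (csum f (S N) + f (S N)).
    rewrite <- IHN. rewrite Cplus_comm. f_equal.
Qed.
Lemma csum_single (h : nat -> C) c N :
  csum (fun j => if Nat.eqb j c then h j else 0) N = if Nat.ltb c N then h c else 0.
Proof.
  induction N; simpl. auto. rewrite IHN.
  destruct (Nat.eqb_spec N c); destruct (Nat.ltb_spec c N); destruct (Nat.ltb_spec c (S N)); subst;
    try lia; ring.
Qed.
Lemma csum_trunc (h : nat -> C) M N : (M <= N)%nat ->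
  csum (fun j => if Nat.ltb j M then h j else 0) N = csum h M.
Proof.
  induction N; intros HM.
  - replace M with 0%nat by lia. auto.
  - destruct (Nat.eq_dec M (S N)).
    + subst M. simpl.
      rewrite (csum_ext _ h) by (intros j Hj; destruct (Nat.ltb_spec j (S N)); auto; lia).
      destruct (Nat.ltb_spec N (S N)); [|lia]. auto.
    + simpl. rewrite IHN by lia. destruct (Nat.ltb_spec N M); [lia|]. ring.
Qed.

Definition Gd (w : C) (f : nat -> C) (s : C) :=
  ex_series (fun k => Cmod (f k * w ^ k)) /\ is_series (fun k => f k * w ^ k) s.
Definition cp (f g : nat -> C) : nat -> C := fun k => csum (fun i => f i * g (k - i)%nat) (S k).
Definition shift (f : nat -> C) : nat -> C := fun k => match k with O => 0 | S m => f m end.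

Lemma Gd_ext w f g s : (forall k, f k = g k) -> Gd w f s -> Gd w g s.
Proof.
  intros H [H1 H2]. split.
  - eapply ex_series_ext; [|exact H1]. intro k. simpl. rewrite H. auto.
  - eapply is_series_ext; [|exact H2]. intro k. simpl. rewrite H. auto.
Qed.
Lemma Gd_val w f s s' : Gd w f s -> s = s' -> Gd w f s'.
Proof. intros H ->. auto. Qed.

Lemma Gd_add w f g s t : Gd w f s -> Gd w g t -> Gd w (fun k => f k + g k) (s + t).
Proof.
  intros [F1 F2] [G1 G2]. split.
  - eapply (ex_series_le (K:=R_AbsRing) (V:=R_CompleteNormedModule)).
    2: exact (ex_series_plus _ _ F1 G1).
    intro k. unfold norm; simpl. rewrite Rabs_pos_eq by apply Cmod_ge_0.
    rewrite Cmult_plus_distr_r. apply Cmod_triangle.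
  - pose proof (is_series_plus _ _ _ _ F2 G2) as H.
    eapply is_series_ext; [|exact H]. intro k. simpl. change (f k * w ^ k + g k * w ^ k = (f k + g k) * w ^ k). ring.
Qed.

Lemma Gd_scal w c f s : Gd w f s -> Gd w (fun k => c * f k) (c * s).
Proof.
  intros [F1 F2]. split.
  - eapply ex_series_ext; [|exact (ex_series_scal_l (K:=R_AbsRing) (Cmod c) _ F1)].
    intro k. simpl. change (Cmod c * Cmod (f k * w ^ k) = Cmod (c * f k * w ^ k))%R.
    rewrite <- Cmod_mult. f_equal. ring.
  - pose proof (is_series_scal (K:=C_AbsRing) (V:=C_NormedModule) c _ _ F2) as H.
    change (scal c s) with (c * s) in H.
    eapply is_series_ext; [|exact H]. intro k. change (c * (f k * w ^ k) = c * f k * w ^ k). ring.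
Qed.

Lemma Gd_sub w f g s t : Gd w f s -> Gd w g t -> Gd w (fun k => f k - g k) (s - t).
Proof.
  intros F G. eapply Gd_val. eapply Gd_ext; [|apply (Gd_add _ _ _ _ _ F (Gd_scal w (-1) _ _ G))].
  intro k. simpl. ring. ring.
Qed.

Lemma Gd_zero w : Gd w (fun _ => 0) 0.
Proof.
  pose proof (Gd_scal w 0 (fun k => 0 ^ k) (/ (1 - 0))) as H.
  assert (G : Gd w (fun k => 0 ^ k) (/ (1 - 0))).
  { destruct (cgeom 0) as [H1 H2]. rewrite Cmod_0; lra.
    split.
    - eapply (ex_series_le (K:=R_AbsRing) (V:=R_CompleteNormedModule)); [|exact H1].
      intro k. unfold norm; simpl. rewrite Rabs_pos_eq by apply Cmod_ge_0.
      destruct k; simpl; [rewrite Cmult_1_l; rewrite Cmod_1; lra|]. rewrite !Cmult_0_l, Cmod_0. lra.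
    - eapply is_series_ext; [|exact H2]. intro k. destruct k; simpl; ring. }
  eapply Gd_val; [eapply Gd_ext; [|exact (H G)]|]; intros; simpl; ring.
Qed.

Lemma Gd_e w : Gd w (fun k => 0 ^ k) 1.
Proof.
  destruct (cgeom 0) as [H1 H2]. rewrite Cmod_0; lra.
  split.
  - eapply (ex_series_le (K:=R_AbsRing) (V:=R_CompleteNormedModule)); [|exact H1].
    intro k. unfold norm; simpl. rewrite Rabs_pos_eq by apply Cmod_ge_0.
    destruct k; simpl; [rewrite Cmult_1_l; rewrite Cmod_1; lra|]. rewrite !Cmult_0_l, Cmod_0. lra.
    assert (E1 : (/ (1 - 0) : C) = 1) by field. rewrite E1 in H2.
    eapply is_series_ext; [|exact H2]. intro k. destruct k; simpl; ring.
Qed.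

Lemma Gd_csum w (F : nat -> nat -> C) (s : nat -> C) N :
  (forall j, (j < N)%nat -> Gd w (F j) (s j)) ->
  Gd w (fun k => csum (fun j => F j k) N) (csum s N).
Proof.
  induction N; intros H.
  - simpl. apply Gd_zero.
  - simpl. apply (Gd_add w (fun k => csum (fun j => F j k) N) (F N)).
    + apply IHN. intros; apply H; lia.
    + apply H; lia.
Qed.

Lemma Gd_cp w f g s t : Gd w f s -> Gd w g t -> Gd w (cp f g) (s * t).
Proof.
  intros [F1 F2] [G1 G2].
  assert (E : forall k, cp f g k * w ^ k =
     csum (fun i => (f i * w ^ i) * (g (k - i)%nat * w ^ (k - i)%nat)) (S k)).
  { intro k. unfold cp. rewrite Cmult_comm, <- csum_scal. apply csum_ext. intros i Hi.
    replace k with (i + (k - i))%nat at 1 by lia. rewrite Cpow_add_r. ring. }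
  split.
  - eapply ex_series_ext; [|exact (cabs_prod _ _ F1 G1)]. intro k. simpl. rewrite E. auto.
  - eapply is_series_ext; [|exact (cmertens _ _ _ _ F1 G1 F2 G2)]. intro k. simpl. rewrite E. auto.
Qed.

Lemma Gd_shift w f s : Gd w f s -> Gd w (shift f) (w * s).
Proof.
  intros [F1 F2]. split.
  - apply ex_series_incr_1. simpl.
    eapply ex_series_ext; [|exact (ex_series_scal_l (K:=R_AbsRing) (Cmod w) _ F1)].
    intro k. change (Cmod w * Cmod (f k * w ^ k) = Cmod (f k * (w * w ^ k)))%R.
    rewrite <- Cmod_mult. f_equal. ring.
  - apply is_series_decr_1. simpl.
    pose proof (is_series_scal (K:=C_AbsRing) (V:=C_NormedModule) w _ _ F2) as H.
    change (scal w s) with (w * s) in H.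
    match goal with |- is_series _ ?x => replace x with (w * s) end.
    2: { change (w * s = Cplus (w * s) (Copp (0 * 1))). ring. }
    eapply is_series_ext; [|exact H]. intro k. change (w * (f k * w ^ k) = f k * (w * w ^ k)). ring.
Qed.

Lemma Gd_geom w c : (Cmod (c * w) < 1)%R -> Gd w (fun k => c ^ k) (/ (1 - c * w)).
Proof.
  intro H. destruct (cgeom _ H) as [H1 H2]. split.
  - eapply ex_series_ext; [|exact H1]. intro k. simpl. rewrite Cpow_mult_l. auto.
  - eapply is_series_ext; [|exact H2]. intro k. simpl. rewrite Cpow_mult_l. auto.
Qed.

Lemma Gd_solve w c R r f : (Cmod (c * w) < 1)%R -> Gd w R r ->
  (forall k, f k = R k + c * shift f k) -> Gd w f (/ (1 - c * w) * r).
Proof.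
  intros Hc HR Hf.
  apply (Gd_ext w (cp (fun k => c ^ k) R)).
  2: apply Gd_cp; [apply Gd_geom; auto | auto].
  intro k. induction k.
  - rewrite Hf. simpl. unfold cp. simpl. ring.
  - rewrite Hf. simpl. rewrite <- IHk. unfold cp. rewrite csum_first.
    rewrite <- csum_scal. replace (S k - 0)%nat with (S k) by lia.
    simpl Cpow at 1. f_equal. ring. apply csum_ext. intros j Hj. simpl. ring.
Qed.

Definition col (F : bser) (j : nat) : nat -> C := fun k => F k j.
Definition zc (f g : nat -> C) (m : nat) : C := csum (fun j => f j * g (m - j)%nat) (S m).

Lemma bmul_col F G k m : bmul F G k m = csum (fun j => cp (col F j) (col G (m - j)%nat) k) (S m).
Proof. unfold bmul, cp, col. apply csum_swap. Qed.

Lemma Gd_bmul w F G sF sG m :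
  (forall j, (j <= m)%nat -> Gd w (col F j) (sF j)) ->
  (forall j, (j <= m)%nat -> Gd w (col G j) (sG j)) ->
  Gd w (col (bmul F G) m) (zc sF sG m).
Proof.
  intros HF HG. eapply Gd_ext. intro k. unfold col at 1. symmetry. apply bmul_col.
  unfold zc. apply (Gd_csum w (fun j k => cp (col F j) (col G (m - j)%nat) k)).
  intros j Hj. apply Gd_cp; [apply HF | apply HG]; lia.
Qed.

Lemma Cnat0 : Cnat 0 = 0.
Proof. reflexivity. Qed.

Section Eqn.
Variable A : bser.
Hypothesis HA : formally_solves A.

Lemma eqn_at k n :
  bz (bmul (badd bone A) (bmul (badd bone A) (badd bone A))) k n - A k n =
  bw (bsub (bmul (badd bone A) (bdelta (bdelta A))) (bmul (bdelta A) (bdelta A))) k n.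
Proof. exact (f_equal (fun F => F k n) HA). Qed.

Lemma bmul_n0 (F G : bser) k : (forall i, G i 0%nat = 0) -> bmul F G k 0%nat = 0.
Proof.
  intro H. rewrite bmul_col. simpl. unfold cp, col. rewrite <- (csum_zero (S k)) at 2.
  rewrite Cplus_0_l. apply csum_ext. intros i _. rewrite H. ring.
Qed.

Lemma A_col0 k : A k 0%nat = 0.
Proof.
  pose proof (eqn_at k 0) as E. unfold bz, bw, bsub in E.
  destruct k.
  - replace (A 0%nat 0%nat) with (- (0 - A 0%nat 0%nat)) by ring. rewrite E. ring.
  - rewrite !bmul_n0 in E by (intros; unfold bdelta; rewrite Cnat0; ring).
    replace (A (S k) 0%nat) with (- (0 - A (S k) 0%nat)) by ring. rewrite E. ring.
Qed.
End Eqn.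

Lemma cp_zero_r (f g : nat -> C) k : (forall i, g i = 0) -> cp f g k = 0.
Proof. intro H. unfold cp. rewrite <- (csum_zero (S k)). apply csum_ext. intros. rewrite H. ring. Qed.
Lemma cp_zero_l (f g : nat -> C) k : (forall i, f i = 0) -> cp f g k = 0.
Proof. intro H. unfold cp. rewrite <- (csum_zero (S k)). apply csum_ext. intros. rewrite H. ring. Qed.
Lemma cp_e (f g : nat -> C) k : (forall i, f i = if Nat.eqb i 0 then 1 else 0) -> cp f g k = g k.
Proof.
  intro H. unfold cp. rewrite csum_first. rewrite H. simpl. rewrite Nat.sub_0_r.
  rewrite (csum_ext _ (fun _ => 0)). rewrite csum_zero. ring.
  intros j _. rewrite H. simpl. ring.
Qed.

Section Eqn2.
Variable A : bser.
Hypothesis HA : formally_solves A.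
Let A1 := badd bone A.
Let DA := bdelta A.
Let DDA := bdelta (bdelta A).
Definition T1 m k' := csum (fun j => cp (col A1 (S j)) (col DDA (m - j)%nat) k') m.
Definition T2 m k' := csum (fun j => cp (col DA (S j)) (col DA (m - j)%nat) k') m.

Lemma claim1 m k' : bmul A1 DDA k' (S m) = Cnat (S m) * (Cnat (S m) * A k' (S m)) + T1 m k'.
Proof.
  rewrite bmul_col, csum_first. rewrite Nat.sub_0_r.
  change (csum (fun j => cp (col A1 (S j)) (col DDA (S m - S j)%nat) k') (S m))
    with (csum (fun j => cp (col A1 (S j)) (col DDA (S m - S j)%nat) k') m
          + cp (col A1 (S m)) (col DDA (S m - S m)%nat) k').
  rewrite Nat.sub_diag. rewrite (cp_zero_r _ (col DDA 0)).
  2: { intro i. unfold col, DDA, bdelta. rewrite Cnat0. ring. }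
  rewrite cp_e. 2: { intro i. unfold col, A1, badd, bone. rewrite (A_col0 A HA). 
    destruct (Nat.eqb i 0); simpl; ring. }
  unfold T1, col at 2, DDA, bdelta. rewrite Cplus_0_r. f_equal.
Qed.

Lemma claim2 m k' : bmul DA DA k' (S m) = T2 m k'.
Proof.
  rewrite bmul_col, csum_first. rewrite Nat.sub_0_r.
  change (csum (fun j => cp (col DA (S j)) (col DA (S m - S j)%nat) k') (S m))
    with (csum (fun j => cp (col DA (S j)) (col DA (S m - S j)%nat) k') m
          + cp (col DA (S m)) (col DA (S m - S m)%nat) k').
  rewrite Nat.sub_diag. rewrite (cp_zero_r _ (col DA 0)).
  2: { intro i. unfold col, DA, bdelta. rewrite Cnat0. ring. }
  rewrite (cp_zero_l (col DA 0)).
  2: { intro i. unfold col, DA, bdelta. rewrite Cnat0. ring. }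
  unfold T2. rewrite Cplus_0_l, Cplus_0_r. apply csum_ext. intros; reflexivity.
Qed.

Lemma eqn_Sm m k :
  A k (S m) = (col (bmul A1 (bmul A1 A1)) m k - shift (fun k' => T1 m k' - T2 m k') k)
              + (- (Cnat (S m) * Cnat (S m))) * shift (col A (S m)) k.
Proof.
  pose proof (eqn_at A HA k (S m)) as E. unfold bz, bw, bsub in E. fold A1 DA DDA in E.
  destruct k.
  - simpl. unfold col. replace (A 0%nat (S m)) with (bmul A1 (bmul A1 A1) 0%nat m - (bmul A1 (bmul A1 A1) 0%nat m - A 0%nat (S m))) by ring.
    rewrite E. ring.
  - simpl. unfold col. rewrite claim1, claim2 in E.
    replace (A (S k) (S m)) with (bmul A1 (bmul A1 A1) (S k) m - (bmul A1 (bmul A1 A1) (S k) m - A (S k) (S m))) by ring.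
    rewrite E. ring.
Qed.
End Eqn2.

Definition dlt (j : nat) : C := if Nat.eqb j 0 then 1 else 0.

Lemma zc_ext_r (f g g' : nat -> C) m : (forall j, (j <= m)%nat -> g j = g' j) -> zc f g m = zc f g' m.
Proof. intro H. unfold zc. apply csum_ext. intros j Hj. rewrite H by lia. auto. Qed.
Lemma zc_addl (f g h : nat -> C) m : zc (fun j => f j + g j) h m = zc f h m + zc g h m.
Proof. unfold zc. rewrite <- csum_add. apply csum_ext. intros. ring. Qed.
Lemma zc_addr (f g h : nat -> C) m : zc h (fun j => f j + g j) m = zc h f m + zc h g m.
Proof. unfold zc. rewrite <- csum_add. apply csum_ext. intros. ring. Qed.
Lemma zc_scalr (f g : nat -> C) c m : zc f (fun j => c * g j) m = c * zc f g m.
Proof. unfold zc. rewrite <- csum_scal. apply csum_ext. intros. ring. Qed.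
Lemma zc_dl (h : nat -> C) m : zc dlt h m = h m.
Proof.
  unfold zc. rewrite csum_first. unfold dlt at 1. simpl. rewrite Nat.sub_0_r.
  rewrite (csum_ext _ (fun _ => 0)). rewrite csum_zero. ring.
  intros j _. unfold dlt. simpl. ring.
Qed.
Lemma zc_dr (h : nat -> C) m : zc h dlt m = h m.
Proof.
  unfold zc. change (csum (fun j => h j * dlt (m - j)%nat) m + h m * dlt (m - m)%nat = h m).
  rewrite Nat.sub_diag. unfold dlt at 2. simpl.
  rewrite (csum_ext _ (fun _ => 0)). rewrite csum_zero. ring.
  intros j Hj. unfold dlt. destruct (Nat.eqb_spec (m - j) 0); [lia|]. ring.
Qed.

Lemma cube (s : nat -> C) m :
  zc (fun j => dlt j + s j) (zc (fun j => dlt j + s j) (fun j => dlt j + s j)) m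
  = dlt m + RtoC 3 * s m + RtoC 3 * zc s s m + zc s (zc s s) m.
Proof.
  assert (I : forall j, zc (fun j => dlt j + s j) (fun j => dlt j + s j) j
                        = dlt j + (RtoC 2 * s j + zc s s j)).
  { intro j. rewrite zc_addl, zc_dl, zc_addr, zc_dr. ring. }
  rewrite (zc_ext_r _ _ (fun j => dlt j + (RtoC 2 * s j + zc s s j))) by (intros; apply I).
  rewrite zc_addl, zc_dl, !zc_addr, zc_dr, zc_scalr. ring.
Qed.

Definition S2d (t : nat -> C) (n : nat) : C := csum (fun j1 => csum (fun j2 =>
         if (1 <=? j1) && (1 <=? j2) && Nat.eqb (j1 + j2)%nat (n - 1)%nat
         then t j1 * t j2 else RtoC 0) n) n.
Definition S3d (t : nat -> C) (n : nat) : C := csum (fun j1 => csum (fun j2 => csum (fun j3 =>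
         if (1 <=? j1) && (1 <=? j2) && (1 <=? j3) && Nat.eqb (j1 + j2 + j3)%nat (n - 1)%nat
         then t j1 * t j2 * t j3 else RtoC 0) n) n) n.
Definition Qd (t : nat -> C) (n : nat) : C := csum (fun j1 =>
         if (1 <=? j1) && (2 * j1 <? n)%nat
         then Cnat (n - 2 * j1)%nat ^ 2 * t j1 * t (n - j1)%nat else RtoC 0) n.

Lemma u_step_eq n t a : u_step n t a =
  if Nat.eqb n 1 then RtoC 1 / (a ^ 2 + RtoC 1)
  else (RtoC 3 * t (n - 1)%nat + RtoC 3 * S2d t n + S3d t n - Qd t n) / (a ^ 2 + Cnat n ^ 2).
Proof. reflexivity. Qed.

Lemma Cnat_sub a b : (b <= a)%nat -> Cnat (a - b) = Cnat a - Cnat b.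
Proof. intro H. unfold Cnat. rewrite minus_INR by auto. apply RtoC_minus. Qed.

Lemma dsum (g : nat -> nat -> C) m N : (m < N)%nat ->
  csum (fun j1 => csum (fun j2 => if Nat.eqb (j1 + j2) m then g j1 j2 else 0) N) N
  = csum (fun j1 => g j1 (m - j1)%nat) (S m).
Proof.
  intro HN.
  rewrite (csum_ext _ (fun j1 => if Nat.ltb j1 (S m) then g j1 (m - j1)%nat else 0)).
  - apply csum_trunc. lia.
  - intros j1 Hj1.
    rewrite (csum_ext _ (fun j2 => if Nat.eqb j2 (m - j1) then (if Nat.ltb j1 (S m) then g j1 j2 else 0) else 0)).
    + rewrite csum_single. destruct (Nat.ltb_spec (m - j1) N); [|lia]. auto.
    + intros j2 _. destruct (Nat.eqb_spec (j1 + j2) m); destruct (Nat.eqb_spec j2 (m - j1));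
        destruct (Nat.ltb_spec j1 (S m)); subst; try lia; auto.
Qed.

Section Comb.
Variables (x : C) (t s : nat -> C) (M : nat).
Hypothesis Hs0 : s 0%nat = 0.
Hypothesis Hst : forall j, (1 <= j <= M)%nat -> s j = t j * x ^ j.

Lemma pair_pt m j1 j2 : (m <= M)%nat ->
  x ^ m * (if (1 <=? j1) && (1 <=? j2) && Nat.eqb (j1 + j2) m then t j1 * t j2 else RtoC 0)
  = if Nat.eqb (j1 + j2) m then s j1 * s j2 else 0.
Proof.
  intro Hm.
  destruct (Nat.eqb_spec (j1 + j2) m).
  - destruct j1 as [|j1']; [simpl; rewrite Hs0; ring|].
    destruct j2 as [|j2']; [simpl; rewrite Hs0; ring|].
    change (1 <=? S j1') with true. change (1 <=? S j2') with true. simpl. rewrite !Hst by lia. subst m. rewrite Cpow_add_r. ring.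
  - rewrite Bool.andb_false_r. ring.
Qed.

Lemma S2_eq m : (m <= M)%nat -> x ^ m * S2d t (S m) = zc s s m.
Proof.
  intro Hm. unfold S2d. replace (S m - 1)%nat with m by lia.
  rewrite <- csum_scal. rewrite (csum_ext _ (fun j1 => csum (fun j2 => if Nat.eqb (j1 + j2) m then s j1 * s j2 else 0) (S m))).
  - rewrite dsum by lia. reflexivity.
  - intros j1 _. rewrite <- csum_scal. apply csum_ext. intros j2 _. apply pair_pt; auto.
Qed.

Lemma S2_gen m N : (m <= M)%nat -> (m < N)%nat ->
  x ^ m * csum (fun j1 => csum (fun j2 =>
     if (1 <=? j1) && (1 <=? j2) && Nat.eqb (j1 + j2) m then t j1 * t j2 else RtoC 0) N) N = zc s s m.
Proof.
  intros Hm HN.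
  rewrite <- csum_scal. rewrite (csum_ext _ (fun j1 => csum (fun j2 => if Nat.eqb (j1 + j2) m then s j1 * s j2 else 0) N)).
  - rewrite dsum by lia. reflexivity.
  - intros j1 _. rewrite <- csum_scal. apply csum_ext. intros j2 _. apply pair_pt; auto.
Qed.

Lemma S3_eq m : (m <= M)%nat -> x ^ m * S3d t (S m) = zc s (zc s s) m.
Proof.
  intro Hm. unfold S3d. replace (S m - 1)%nat with m by lia.
  rewrite <- csum_scal.
  rewrite (csum_ext _ (fun j1 => if Nat.ltb j1 (S m) then s j1 * zc s s (m - j1)%nat else 0)).
  - rewrite csum_trunc by lia. reflexivity.
  - intros j1 Hj1. destruct (Nat.ltb_spec j1 (S m)).
    + destruct j1 as [|j1'].
      * rewrite Hs0, Cmult_0_l.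
        transitivity (x ^ m * 0); [|ring]. f_equal.
        transitivity (csum (fun _ => 0) (S m)); [|apply csum_zero].
        apply csum_ext. intros j2 _. transitivity (csum (fun _ => 0) (S m)); [|apply csum_zero].
        apply csum_ext. intros. reflexivity.
      * rewrite Hst by lia.
        rewrite <- (S2_gen (m - S j1') (S m)) by lia.
        rewrite <- !csum_scal. apply csum_ext. intros j2 _. rewrite <- !csum_scal. apply csum_ext. intros j3 _.
        simpl (1 <=? S j1'). rewrite Bool.andb_true_l.
        destruct (Nat.eqb_spec (S j1' + j2 + j3) m); destruct (Nat.eqb_spec (j2 + j3) (m - S j1')); try lia.
        -- replace (x ^ m) with (x ^ (S j1') * x ^ (m - S j1')) by (rewrite <- Cpow_add_r; f_equal; lia).
           destruct (1 <=? j2); destruct (1 <=? j3); simpl; ring.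
        -- rewrite !Bool.andb_false_r. ring.
    + transitivity (x ^ m * 0); [|ring]. f_equal.
      transitivity (csum (fun _ => 0) (S m)); [|apply csum_zero].
      apply csum_ext. intros j2 _. transitivity (csum (fun _ => 0) (S m)); [|apply csum_zero].
      apply csum_ext. intros j3 _.
      destruct (Nat.eqb_spec (j1 + j2 + j3) m); [lia|]. rewrite Bool.andb_false_r. reflexivity.
Qed.
End Comb.

Section Quad.
Variables (x : C) (t s : nat -> C) (m : nat).
Hypothesis Hs0 : s 0%nat = 0.
Hypothesis Hst : forall j, (1 <= j <= m)%nat -> s j = t j * x ^ j.

Definition Hq j := s j * s (S m - j)%nat * (Cnat (S m - j) * Cnat (S m - j) - Cnat j * Cnat (S m - j)).
Definition FD j := s j * s (S m - j)%nat * (Cnat (S m - j) - Cnat j) ^ 2.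
Definition Lq j := if Nat.ltb (2 * j) (S m) then FD j else 0.
Definition Uq j := if Nat.ltb (S m) (2 * j) then FD j else 0.

Lemma Q_step1 :
  csum (fun j => s (S j) * (Cnat (m - j) * (Cnat (m - j) * s (m - j)%nat))
               - Cnat (S j) * s (S j) * (Cnat (m - j) * s (m - j)%nat)) m
  = csum Hq (S (S m)).
Proof.
  rewrite csum_first. unfold Hq at 1. rewrite Hs0.
  change (csum (fun j => Hq (S j)) (S m)) with (csum (fun j => Hq (S j)) m + Hq (S m)).
  unfold Hq at 2. rewrite Nat.sub_diag. rewrite Hs0.
  replace (csum (fun j => Hq (S j)) m) with
   (csum (fun j => s (S j) * (Cnat (m - j) * (Cnat (m - j) * s (m - j)%nat))
               - Cnat (S j) * s (S j) * (Cnat (m - j) * s (m - j)%nat)) m).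
  ring.
  apply csum_ext. intros j Hj. unfold Hq. simpl (S m - S j)%nat. ring.
Qed.

Lemma Q_step2 : csum Hq (S (S m)) + csum Hq (S (S m)) = csum FD (S (S m)).
Proof.
  transitivity (csum Hq (S (S m)) + csum (fun j => Hq (S m - j)%nat) (S (S m))).
  { rewrite csum_rev. auto. }
  rewrite <- csum_add. apply csum_ext. intros j Hj. unfold Hq, FD.
  replace (S m - (S m - j))%nat with j by lia. ring.
Qed.

Lemma Q_step3 : csum FD (S (S m)) = csum Lq (S (S m)) + csum Lq (S (S m)).
Proof.
  transitivity (csum (fun j => Lq j + Uq j) (S (S m))).
  { apply csum_ext. intros j Hj. unfold Lq, Uq.
    destruct (Nat.ltb_spec (2 * j) (S m)); destruct (Nat.ltb_spec (S m) (2 * j)); try lia; try ring.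
    assert (E : (S m - j)%nat = j) by lia. unfold FD. rewrite E. ring. }
  rewrite csum_add. f_equal.
  rewrite <- csum_rev. apply csum_ext. intros j Hj. unfold Lq, Uq.
  destruct (Nat.ltb_spec (2 * j) (S m)); destruct (Nat.ltb_spec (S m) (2 * (S m - j))); try lia; try ring.
  unfold FD. replace (S m - (S m - j))%nat with j by lia. ring.
Qed.

Lemma Q_step4 : x ^ (S m) * Qd t (S m) = csum Lq (S (S m)).
Proof.
  change (csum Lq (S (S m))) with (csum Lq (S m) + Lq (S m)).
  unfold Lq at 2. destruct (Nat.ltb_spec (2 * S m) (S m)); [lia|].
  rewrite Cplus_0_r. unfold Qd. rewrite <- csum_scal. apply csum_ext. intros j Hj.
  unfold Lq. destruct j as [|j'].
  - simpl. unfold FD. rewrite Hs0. ring.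
  - change (1 <=? S j') with true. rewrite Bool.andb_true_l.
    destruct (Nat.ltb_spec (2 * S j') (S m)); [|ring].
    unfold FD. rewrite !Hst by lia.
    replace (S m - 2 * S j')%nat with ((S m - S j') - S j')%nat by lia.
    rewrite Cnat_sub by lia.
    replace (x ^ S m) with (x ^ S j' * x ^ (S m - S j')) by (rewrite <- Cpow_add_r; f_equal; lia).
    ring.
Qed.

Lemma Q_eq :
  csum (fun j => s (S j) * (Cnat (m - j) * (Cnat (m - j) * s (m - j)%nat))
               - Cnat (S j) * s (S j) * (Cnat (m - j) * s (m - j)%nat)) m
  = x ^ (S m) * Qd t (S m).
Proof.
  rewrite Q_step1, Q_step4.
  assert (E : csum Hq (S (S m)) + csum Hq (S (S m)) = csum Lq (S (S m)) + csum Lq (S (S m)))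
    by (rewrite Q_step2; apply Q_step3).
  assert (H2 : RtoC 2 <> 0).
  { intro H. apply RtoC_inj in H. lra. }
  replace (csum Hq (S (S m))) with ((csum Hq (S (S m)) + csum Hq (S (S m))) / RtoC 2) by (field; auto).
  rewrite E. field.
Qed.
End Quad.

Lemma u_table_spec (a : C) m j : (1 <= j <= m)%nat -> u_table m a j = u j a.
Proof.
  induction m; intro H; [lia|].
  simpl. destruct (Nat.leb_spec j m).
  - apply IHm. lia.
  - assert (j = S m) by lia. subst j. unfold u.
    change (u_table (S m) a (S m)) with (if S m <=? m then u_table m a (S m) else u_step (S m) (u_table m a) a).
    destruct (Nat.leb_spec (S m) m); [lia|]. auto.
Qed.
Lemma u_S (a : C) m : u (S m) a = u_step (S m) (u_table m a) a.
Proof.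
  unfold u. change (u_table (S m) a (S m)) with (if S m <=? m then u_table m a (S m) else u_step (S m) (u_table m a) a).
  destruct (Nat.leb_spec (S m) m); [lia|]. auto.
Qed.

Lemma Cinv_pow (y : C) k : y <> 0 -> / (y ^ k) = (/ y) ^ k.
Proof.
  intro H. induction k; simpl. field.
  rewrite <- IHk. field. split; auto. apply Cpow_nz; auto.
Qed.

Lemma Cmod_Cnat n : Cmod (Cnat n) = INR n.
Proof. unfold Cnat. rewrite Cmod_R. apply Rabs_pos_eq, pos_INR. Qed.

Section Main.
Variable A : bser.
Hypothesis HA : formally_solves A.
Variable a : C.

Let x := a ^ 2.
Let w := / x.
Definition Vv (j : nat) : C := u j a * a ^ (2 * j).
Definition sA (j : nat) : C := if Nat.eqb j 0 then 0 else Vv j.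
Definition sA1 (j : nat) : C := dlt j + sA j.

Lemma Gd_bone j : Gd w (col bone j) (dlt j).
Proof.
  destruct j.
  - eapply Gd_ext; [|apply Gd_e]. intro k. unfold col, bone. destruct k; simpl; ring.
  - eapply Gd_ext; [|apply Gd_zero]. intro k. unfold col, bone.
    rewrite Bool.andb_false_r. auto.
Qed.

Lemma step m :
  (forall j, (1 <= j <= m)%nat -> Gd w (col A j) (Vv j)) ->
  (INR (S m) < Cmod a)%R ->
  Gd w (col A (S m)) (Vv (S m)).
Proof.
  intros IH Ha.
  assert (HsA : forall j, (j <= m)%nat -> Gd w (col A j) (sA j)).
  { intros j Hj. unfold sA. destruct (Nat.eqb_spec j 0).
    - subst j. eapply Gd_ext; [|apply Gd_zero]. intro k. unfold col. rewrite (A_col0 A HA). auto.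
    - apply IH. lia. }
  assert (HsA1 : forall j, (j <= m)%nat -> Gd w (col (badd bone A) j) (sA1 j)).
  { intros j Hj. eapply Gd_ext; [|apply (Gd_add _ _ _ _ _ (Gd_bone j) (HsA j Hj))].
    intro k. reflexivity. }
  assert (HP : Gd w (col (bmul (badd bone A) (bmul (badd bone A) (badd bone A))) m)
                    (zc sA1 (zc sA1 sA1) m)).
  { apply Gd_bmul; auto. intros j Hj. apply Gd_bmul; intros; apply HsA1; lia. }
  assert (HDA : forall i, (i <= m)%nat -> Gd w (col (bdelta A) i) (Cnat i * sA i)).
  { intros i Hi. eapply Gd_ext; [|apply (Gd_scal _ (Cnat i) _ _ (HsA i Hi))]. intro k. reflexivity. }
  assert (HDDA : forall i, (i <= m)%nat -> Gd w (col (bdelta (bdelta A)) i) (Cnat i * (Cnat i * sA i))).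
  { intros i Hi. eapply Gd_ext; [|apply (Gd_scal _ (Cnat i) _ _ (HDA i Hi))]. intro k. reflexivity. }
  assert (HT1 : Gd w (T1 A m) (csum (fun j => sA1 (S j) * (Cnat (m - j) * (Cnat (m - j) * sA (m - j)%nat))) m)).
  { unfold T1. apply (Gd_csum w (fun j k => cp (col (badd bone A) (S j)) (col (bdelta (bdelta A)) (m - j)%nat) k)).
    intros j Hj. apply Gd_cp; [apply HsA1 | apply HDDA]; lia. }
  assert (HT2 : Gd w (T2 A m) (csum (fun j => Cnat (S j) * sA (S j) * (Cnat (m - j) * sA (m - j)%nat)) m)).
  { unfold T2. apply (Gd_csum w (fun j k => cp (col (bdelta A) (S j)) (col (bdelta A) (m - j)%nat) k)).
    intros j Hj. apply Gd_cp; [apply HDA | apply HDA]; lia. }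
  assert (Hn1 : (1 <= INR (S m))%R) by (rewrite S_INR; pose proof (pos_INR m); lra).
  assert (Ha0 : a <> 0).
  { intro H. rewrite H, Cmod_0 in Ha. lra. }
  assert (Hx0 : x <> 0) by (unfold x; apply Cpow_nz; auto).
  assert (HmodX : Cmod x = (Cmod a * Cmod a)%R) by (unfold x; rewrite Cmod_pow; simpl; ring).
  assert (Hlt : (INR (S m) * INR (S m) < Cmod x)%R).
  { rewrite HmodX. apply Rmult_le_0_lt_compat; lra. }
  assert (Hxn : x + Cnat (S m) * Cnat (S m) <> 0).
  { intro H. assert (x = - (Cnat (S m) * Cnat (S m))) by (rewrite <- (Cplus_0_l (- _)), <- H; ring).
    rewrite H0, Cmod_opp, Cmod_mult, Cmod_Cnat in Hlt. lra. }
  set (c := - (Cnat (S m) * Cnat (S m))).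
  assert (Hcw : (Cmod (c * w) < 1)%R).
  { unfold c, w. rewrite Cmod_mult, Cmod_opp, Cmod_mult, Cmod_Cnat, Cmod_inv by auto.
    apply (Rmult_lt_reg_r (Cmod x)). apply Cmod_gt_0; auto.
    rewrite Rmult_assoc, Rinv_l, Rmult_1_r, Rmult_1_l. exact Hlt.
    apply Rgt_not_eq, Cmod_gt_0; auto. }
  pose proof (Gd_sub _ _ _ _ _ HP (Gd_shift _ _ _ (Gd_sub _ _ _ _ _ HT1 HT2))) as HR.
  pose proof (Gd_solve w c _ _ (col A (S m)) Hcw HR (fun k => eqn_Sm A HA m k)) as HS.
  eapply Gd_val; [exact HS|].
  assert (Hst : forall j, (1 <= j <= m)%nat -> sA j = u_table m a j * x ^ j).
  { intros j Hj. unfold sA. destruct (Nat.eqb_spec j 0); [lia|]. unfold Vv.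
    rewrite u_table_spec by lia. unfold x. rewrite Cpow_mult_r. auto. }
  assert (Hs0 : sA 0%nat = 0) by reflexivity.
  rewrite <- csum_sub.
  rewrite (csum_ext _ (fun j => sA (S j) * (Cnat (m - j) * (Cnat (m - j) * sA (m - j)%nat))
               - Cnat (S j) * sA (S j) * (Cnat (m - j) * sA (m - j)%nat)))
    by (intros; unfold sA1, dlt; simpl; ring).
  rewrite (Q_eq x (u_table m a) sA m Hs0 Hst).
  unfold sA1. rewrite cube.
  unfold Vv. rewrite u_S, u_step_eq.
  replace (a ^ (2 * S m)) with (x ^ S m) by (unfold x; rewrite Cpow_mult_r; auto).
  destruct m as [|m'].
  - simpl Nat.eqb. cbv iota. unfold zc, Qd. simpl. rewrite Hs0. unfold dlt. simpl.
    unfold c, w in *. unfold x in *. unfold Cnat in *. simpl INR in *. simpl in Hxn, Hx0.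
    field. split; [intro H; apply Hxn; cbv beta in H; rewrite <- H; ring | exact Ha0].
  - change (Nat.eqb (S (S m')) 1) with false. cbv iota.
    replace (S (S m') - 1)%nat with (S m') by lia.
    rewrite <- (S2_eq x (u_table (S m') a) sA (S m') Hs0 Hst (S m')) by lia.
    rewrite <- (S3_eq x (u_table (S m') a) sA (S m') Hs0 Hst (S m')) by lia.
    rewrite (Hst (S m')) by lia. unfold dlt. simpl Nat.eqb. cbv iota.
    change (x ^ S (S m')) with (x * x ^ S m').
    generalize (x ^ S m') as P. intro P.
    unfold c, w in *. unfold x in *. field.
    split; [intro H; apply Hxn; rewrite <- H; ring | exact Ha0].
Qed.
End Main.

Lemma main_ind (A : bser) (HA : formally_solves A) (a : C) :
  forall N n, (n <= N)%nat -> (1 <= n)%nat -> (INR n < Cmod a)%R -> Gd (/ a ^ 2) (col A n) (Vv a n).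
Proof.
  induction N; intros n HnN Hn Ha; [lia|].
  destruct (Nat.le_gt_cases n N); [apply IHN; auto|].
  assert (n = S N) by lia. subst n.
  apply step; auto. intros j Hj. apply IHN; try lia.
  eapply Rle_lt_trans; [|exact Ha]. apply le_INR. lia.
Qed.

Lemma term_eq (A : bser) n (a : C) k : a <> 0 ->
  (- RtoC 1) ^ k * Akn A k n / a ^ (2 * k) = col A n k * (/ a ^ 2) ^ k.
Proof.
  intro Ha. unfold Akn, col. rewrite Cpow_mult_r. rewrite <- Cinv_pow by (apply Cpow_nz; auto).
  rewrite Cmult_assoc, <- Cpow_mult_l.
  replace (- RtoC 1 * - RtoC 1) with (RtoC 1) by ring. rewrite Cpow_1_l.
  field. apply Cpow_nz, Cpow_nz; auto.
Qed.

Theorem corollary1 (A : bser) :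
  A 0%nat 0%nat = RtoC 0 ->
  holo_disk A ->
  formally_solves A ->
  forall n : nat, (1 <= n)%nat ->
  forall a : C, (INR n < Cmod a)%R ->
    ex_series (fun k => Cmod ((- RtoC 1) ^ k * Akn A k n / a ^ (2 * k))) /\
    is_series (fun k => (- RtoC 1) ^ k * Akn A k n / a ^ (2 * k)) (u n a * a ^ (2 * n)).
Proof.
  intros _ _ HA n Hn a Ha.
  assert (Ha0 : a <> 0).
  { intro H. rewrite H, Cmod_0 in Ha. pose proof (le_INR 1 n Hn). simpl in H0. lra. }
  destruct (main_ind A HA a n n (le_n n) Hn Ha) as [E S].
  split.
  - eapply ex_series_ext; [|exact E]. intro k. simpl. rewrite term_eq by auto. reflexivity.
  - eapply is_series_ext; [|exact S]. intro k. simpl. rewrite term_eq by auto. reflexivity.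
Qed.
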